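(* A closed reversible reaction network $(X,\mathscr{R})$ is free of cornucopias and abysses if and only if it is conservative.
   Context: A reaction network (RN) $(X,\mathscr{R})$ consists of a finite non-empty set $X$ of species and a finite non-empty set $\mathscr{R}$ of reactions. Each reaction $r$ is given by stoichiometric coefficients $s^-_{xr},s^+_{xr}\in\mathbb{N}_0$. The stoichiometric matrix $S\in\mathbb{Z}^{X\times\mathscr{R}}$ has entries $S_{xr}=s^+_{xr}-s^-_{xr}$. The RN is closed if every reaction $r$ has some $x$ with $S_{xr}<0$ and some $y$ with $S_{yr}>0$. The reverse $\bar r$ of $r$ has $s^-_{x\bar r}=s^+_{xr}$ and $s^+_{x\bar r}=s^-_{xr}$. The RN is reversible if $r\in\mathscr{R}$ implies $\bar r\in\mathscr{R}$. For a real vector $w$: - $w>0$ means $w$ is componentwise non-negative and nonzero; - $w<0$ means $-w>0$; - $w\gg0$ means all entries are positive. A flow $v\in\mathbb{R}^{\mathscr{R}}$ with $v>0$ is a cornucopia if $Sv>0$, and an abyss if $Sv<0$. The RN is conservative if there is $m\in\mathbb{R}^X$ with $m\gg0$ and $m^\top S=0$. *)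

(* Defs.v *)
From mathcomp Require Import all_boot all_order all_algebra.
From mathcomp Require Import reals.
Set Implicit Arguments. Unset Strict Implicit. Unset Printing Implicit Defensive.
Import Order.TTheory GRing.Theory Num.Theory.
Local Open Scope ring_scope.

(* A reaction network: species indexed by a finType X, reactions by a finType
   Rn; reaction r has reactant coefficients sm r x and product coefficients
   sp r x (natural numbers). *)
Record RN (X Rn : finType) := MkRN {
  sm : Rn -> X -> nat;
  sp : Rn -> X -> nat }.

(* Distinct reaction indices denote distinct reactions (R is a set). *)
Definition RN_simple (X Rn : finType) (N : RN X Rn) : Prop :=
  forall r r', (forall x, sm N r x = sm N r' x) ->
               (forall x, sp N r x = sp N r' x) -> r = r'.

Definition stoich (R : numDomainType) (X Rn : finType) (N : RN X Rn)
  : 'M[R]_(#|X|, #|Rn|) :=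
  \matrix_(i, j) ((sp N (enum_val j) (enum_val i))%:R
                  - (sm N (enum_val j) (enum_val i))%:R).

Definition closed_RN (X Rn : finType) (N : RN X Rn) : Prop :=
  forall r : Rn, (exists x, (sp N r x < sm N r x)%N) /\
                 (exists y, (sm N r y < sp N r y)%N).

Definition reversible (X Rn : finType) (N : RN X Rn) : Prop :=
  forall r : Rn, exists r' : Rn,
    (forall x, sm N r' x = sp N r x) /\ (forall x, sp N r' x = sm N r x).

Definition semipos (R : numDomainType) m n (w : 'M[R]_(m, n)) : Prop :=
  (forall i j, 0 <= w i j) /\ w != 0.
Definition strictpos (R : numDomainType) m n (w : 'M[R]_(m, n)) : Prop :=
  forall i j, 0 < w i j.

Definition cornucopia (R : numDomainType) (X Rn : finType) (N : RN X Rn)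
  (v : 'cV[R]_#|Rn|) : Prop :=
  semipos v /\ semipos (stoich R N *m v).
Definition abyss (R : numDomainType) (X Rn : finType) (N : RN X Rn)
  (v : 'cV[R]_#|Rn|) : Prop :=
  semipos v /\ semipos (- (stoich R N *m v)).

Definition conservative (R : numDomainType) (X Rn : finType) (N : RN X Rn)
  : Prop :=
  exists m : 'cV[R]_#|X|, strictpos m /\ m^T *m stoich R N = 0.

(* Main.v *)
Require Import Defs.
From mathcomp Require Import all_boot all_order all_algebra.
From mathcomp Require Import reals boolp.
From Stdlib Require Import Classical.
Import Order.TTheory GRing.Theory Num.Theory.
Local Open Scope ring_scope.

Section FarkasSec.
Variable R : realFieldType.
Variable k : nat.

Definition dot (a : 'rV[R]_k) (x : 'cV[R]_k) : R := (a *m x) 0 0.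

Lemma dotBl a b x : dot (a - b) x = dot a x - dot b x.
Proof. by rewrite /dot mulmxBl !mxE. Qed.
Lemma dotZl c a x : dot (c *: a) x = c * dot a x.
Proof. by rewrite /dot -scalemxAl !mxE. Qed.
Lemma dotBr a x y : dot a (x - y) = dot a x - dot a y.
Proof. by rewrite /dot mulmxBr !mxE. Qed.
Lemma dotZr c a x : dot a (c *: x) = c * dot a x.
Proof. by rewrite /dot -scalemxAr !mxE. Qed.
Lemma dotNr a x : dot a (- x) = - dot a x.
Proof. by rewrite /dot mulmxN !mxE. Qed.

Lemma farkas m (a : 'I_m -> 'rV[R]_k) (b : 'rV_k) :
  (forall x, (forall i, 0 <= dot (a i) x) -> 0 <= dot b x) ->
  exists2 l : 'I_m -> R, (forall i, 0 <= l i) & b = \sum_i l i *: a i.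
Proof.
elim: m a b => [|m IH] a b H.
  exists (fun _ => 0) => //; rewrite big_ord0.
  apply/rowP => j; rewrite mxE.
  have H1 := H (delta_mx j 0) (fun i => match i with Ordinal _ p => False_ind _ (notF p) end).
  have H2 := H (- delta_mx j 0) (fun i => match i with Ordinal _ p => False_ind _ (notF p) end).
  have E : dot b (delta_mx j 0) = b 0 j.
    rewrite /dot mxE (bigD1 j) //= mxE !eqxx mulr1 big1 ?addr0 // => i ne.
    by rewrite mxE (negPf ne) mulr0.
  rewrite dotNr E oppr_ge0 in H2; rewrite E in H1.
  by apply/eqP; rewrite eq_le H1 H2.
set a0 := a ord0; set a' := fun i => a (lift ord0 i).
have Ha : forall x, (forall i, 0 <= dot (a i) x) <-> (0 <= dot a0 x /\ forall i, 0 <= dot (a' i) x).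
  move=> x; split; first by move=> h; split; [exact: h | move=> i; exact: h].
  move=> [h0 h1] i; case: (unliftP ord0 i) => [j ->|->]; [exact: h1 | exact: h0].
have ext : forall (c : R) (l' : 'I_m -> R), 0 <= c -> (forall i, 0 <= l' i) ->
    b = c *: a0 + \sum_i l' i *: a' i ->
    exists2 l : 'I_m.+1 -> R, (forall i, 0 <= l i) & b = \sum_i l i *: a i.
  move=> c l' c0 l0 Eb.
  exists (fun i => if unlift ord0 i is Some j then l' j else c).
    by move=> i; case: (unlift ord0 i).
  by rewrite big_ord_recl unlift_none Eb; congr (_ + _); apply: eq_bigr => i _; rewrite liftK.
case: (classic (forall x, (forall i, 0 <= dot (a' i) x) -> 0 <= dot b x)) => [Hc|Hc].
  have [l' l0 El] := IH a' b Hc.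
  by apply: (ext 0 l') => //; rewrite scale0r add0r.
have [z Hz] := not_all_ex_not _ _ Hc.
have [Hz1 Hz2] := imply_to_and _ _ Hz.
have bz : dot b z < 0 by rewrite ltNge; apply/negP.
have dz : dot a0 z < 0.
  rewrite ltNge; apply/negP => h; apply: Hz2; apply: H; exact/Ha.
set d := dot a0 z.
have dn0 : d != 0 by rewrite lt_eqF.
set a'' := fun i => a' i - (dot (a' i) z / d) *: a0.
set b'' := b - (dot b z / d) *: a0.
have sw : forall p q : R, p / d * q = q / d * p.
  by move=> p q; rewrite mulrAC [in RHS]mulrAC (mulrC p).
have H'' : forall x, (forall i, 0 <= dot (a'' i) x) -> 0 <= dot b'' x.
  move=> x hx.
  set y := x - (dot a0 x / d) *: z.
  have Ey : forall c, dot c y = dot c x - (dot a0 x / d) * dot c z.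
    by move=> c; rewrite /y dotBr dotZr.
  have : 0 <= dot b y.
    apply: H; apply/Ha; split.
      by rewrite Ey -/d mulfVK // subrr.
    move=> i; have := hx i; rewrite /a'' dotBl dotZl Ey.
    by rewrite sw.
  by rewrite Ey /b'' dotBl dotZl sw.
have [l' l0 El] := IH a'' b'' H''.
set mu := dot b z / d - \sum_i l' i * (dot (a' i) z / d).
apply: (ext mu l') => //.
  rewrite /mu subr_ge0; apply: (@le_trans _ _ 0).
    apply: sumr_le0 => i _; apply: mulr_ge0_le0 => //.
    by apply: mulr_ge0_le0 => //; rewrite invr_le0 ltW.
  by apply: ltW; rewrite -mulrNN mulr_gt0 // oppr_gt0 ?invr_lt0.
have -> : b = b'' + (dot b z / d) *: a0 by rewrite /b'' subrK.
rewrite El /a'' /mu.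
under eq_bigr => i _ do rewrite scalerBr scalerA.
rewrite sumrB -scaler_suml scalerBl.
by rewrite addrAC [in RHS]addrAC; congr (_ + _); rewrite addrC.
Qed.

End FarkasSec.
Arguments dot {R k}.

Lemma semipos_dot (R : realFieldType) n (m w : 'cV[R]_n) :
  strictpos m -> semipos w -> 0 < (m^T *m w) 0 0.
Proof.
move=> mp [w0 wn0].
have [i hi] : exists i, w i 0 != 0.
  apply: contrapT => h; move/negP: wn0; apply; apply/eqP/matrixP => i j.
  rewrite ord1 mxE; apply/eqP; apply: contrapT => hi; apply: h; by exists i; apply/negP.
rewrite mxE (bigD1 i) //= mxE.
apply: ltr_wpDr; first by apply: sumr_ge0 => j _; rewrite mxE mulr_ge0 // ltW.
by rewrite mulr_gt0 // lt_def hi w0.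
Qed.

Arguments semipos_dot {R n m w}.

Theorem theorem4 (R : realType) (X Rn : finType) (N : RN X Rn) :
  (0 < #|X|)%N -> (0 < #|Rn|)%N -> RN_simple N ->
  closed_RN N -> reversible N ->
  ((forall v : 'cV[R]_#|Rn|, ~ cornucopia N v /\ ~ abyss N v)
   <-> conservative R N).
Proof.
move=> _ _ _ _ rev.
set S := stoich R N.
split; last first.
  move=> [m [mpos mS]] v; split => [[_ hw]|[_ hw]].
    by have := semipos_dot mpos hw; rewrite mulmxA -/S mS mul0mx mxE ltxx.
  by have := semipos_dot mpos hw; rewrite mulmxN mulmxA -/S mS mul0mx oppr0 mxE ltxx.
move=> H.
have [rho Hrho] := boolp.choice rev.
set rho' := fun j : 'I_#|Rn| => enum_rank (rho (enum_val j)).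
have colrev : forall j : 'I_#|Rn|, S *m delta_mx (rho' j) (0 : 'I_1) = - (S *m delta_mx j (0 : 'I_1)).
  move=> j; rewrite -!colE; apply/colP => i; rewrite !mxE /rho' enum_rankK.
  by have [h1 h2] := Hrho (enum_val j); rewrite h1 h2 opprB.
have Sx : forall x : 'cV[R]_#|Rn|, S *m x = \sum_j x j 0 *: (S *m delta_mx j 0).
  move=> x; rewrite {1}(matrix_sum_delta x) mulmx_sumr; apply: eq_bigr => j _.
  by rewrite big_ord1 scalemxAr.
have flow : forall x : 'cV[R]_#|Rn|, exists v : 'cV[R]_#|Rn|,
    (forall j, 0 <= v j 0) /\ S *m v = S *m x.
  move=> x.
  exists (\sum_j ((if 0 <= x j 0 then x j 0 else 0) *: delta_mx j 0
             + (if 0 <= x j 0 then 0 else - x j 0) *: delta_mx (rho' j) 0)).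
  split.
    move=> j; rewrite summxE; apply: sumr_ge0 => l _; rewrite !mxE.
    apply: addr_ge0; apply: mulr_ge0; rewrite ?ler0n //; case: ifP => h //.
    by rewrite oppr_ge0 ltW // ltNge h.
  rewrite [RHS]Sx mulmx_sumr; apply: eq_bigr => j _.
  rewrite mulmxDr -!scalemxAr colrev scalerN -scaleNr -scalerDl.
  by congr (_ *: _); case: ifP => _; rewrite ?subr0 ?opprK ?add0r.
have dotS : forall (x : 'cV[R]_#|Rn|) j, dot (row j S) x = (S *m x) j 0.
  by move=> x j; rewrite /dot -row_mul mxE.
have key : forall i, exists l : 'I_#|X| -> R,
    (forall j, 0 <= l j) /\ - row i S = \sum_j l j *: row j S.
  move=> i.
  have [l l0 El] : exists2 l : 'I_#|X| -> R, (forall j, 0 <= l j) & - row i S = \sum_j l j *: row j S.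
    apply: farkas => x hx.
    rewrite /dot mulNmx mxE -/(dot _ _) dotS oppr_ge0.
    rewrite leNgt; apply/negP => hi.
    have [v [v0 Ev]] := flow x.
    apply: (proj1 (H v)); split; last first.
      split; first by move=> j j'; rewrite ord1 Ev -dotS.
      by apply/negP => /eqP h; move: hi; rewrite -Ev h mxE ltxx.
    split => // [j j'|]; first by rewrite ord1.
    by apply/negP => /eqP h; move: hi; rewrite -Ev h mulmx0 mxE ltxx.
  by exists l.
have [L HL] := boolp.choice key.
exists (\col_j (1 + \sum_i L i j)); split.
  move=> j j'; rewrite mxE; apply: (lt_le_trans ltr01).
  by rewrite lerDl sumr_ge0 // => i _; apply: (proj1 (HL i)).
rewrite mulmx_sum_row.
under eq_bigr do rewrite !mxE scalerDl scale1r scaler_suml.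
rewrite big_split /= exchange_big /=.
under [X in _ + X]eq_bigr do rewrite -(proj2 (HL _)).
by rewrite sumrN subrr.
Qed.
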